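(* In the adaptive clinching auction for one infinitely divisible good (described in the context), the allocations in the stopping step (I) can be carried out in such a way that, when the auction stops, there is at most one bidder $i$ with final allocation $X_i>0$ and total payment $P_i<B_i$.
   Context: One unit of an infinitely divisible good is sold to $n$ bidders; bidder $i$ reports valuation $v_i$ per unit and budget $B_i>0$; $X_i$ and $P_i$ denote the final allocation and total payment of bidder $i$. The adaptive clinching auction is a process indexed by time $t\ge0$, with price $p(t)$, effective budgets $b_i(t)$, allocations $x_i(t)$, payments $P_i(t)$, and supply $S(t)=1-\sum_ix_i(t)$; initially $p(0)=0$, $x_i(0)=P_i(0)=0$, $b_i(0)=B_i$, $S(0)=1$. Demand $D_i(t)=b_i(t)/p(t)$ and $D_{-i}(t)=\sum_{j\ne i}D_j(t)$. Active set $A(t)=\{j:v_j>p(t),b_j(t)>0\}$, exiting set $E(t)=\{j:v_j=p(t),b_j(t)>0\}$, clinching set $C(t)=\{j\in A(t):S(t)=D_{-j}(t)\}$. With a fixed report-independent ordering of the bidders, the rules (primes are time derivatives; unmentioned quantities are constant) are: (I) if $\sum_{i\in A(t)}D_i(t)\le S(t)$, stop at time $f=t$ and, at unit price $p(t)$ respecting budgets, give each $i\in A(t)$ amount $D_i(t)$ and give the remaining amount $S(t)-\sum_{i\in A(t)}D_i(t)$ to bidders in $E(t)$ (how this remainder is split among $E(t)$ is not otherwise specified); (II) else if $E(t)=\emptyset\ne A(t)$: $p'=1$, and for $i\in C(t)$: $b_i'=-S(t)$, $P_i'=S(t)$, $x_i'=S(t)/p(t)$; (III) else if $E(t)\ne\emptyset\ne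 A(t)$: $p'=0$; for the smallest-index $j\in E(t)$: $b_j'=-1$, $P_j'=x_j'=0$; for $i\in C(t)$: $b_i'=-1$, $P_i'=1$, $x_i'=1/p(t)$. *)

(* Defs.v *)
From HB Require Import structures.
From mathcomp Require Import all_boot all_order all_algebra.
From mathcomp Require Import all_classical all_reals all_analysis.
Set Implicit Arguments. Unset Strict Implicit. Unset Printing Implicit Defensive.
Import Order.TTheory GRing.Theory Num.Theory.
Import numFieldNormedType.Exports.
Local Open Scope ring_scope.
Local Open Scope classical_set_scope.

(* Adaptive clinching auction, one unit of a divisible good, bidders 'I_n
   (the report-independent ordering is the order of 'I_n).
   v i = valuation, B i = budget.  A run is given by the price p(t),
   effective budgets b i t, allocations x i t, payments P i t, and the
   stopping time f. *)

Definition has_rderiv (R : realType) (g : R -> R) (t d : R) : Prop :=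
  (fun h : R => (g (t + h) - g t) / h) @ at_right 0 --> d.

Definition supply (R : realType) (n : nat) (x : 'I_n -> R -> R) (t : R) : R :=
  1 - \sum_(i < n) x i t.

Definition demand (R : realType) (n : nat) (p : R -> R) (b : 'I_n -> R -> R)
  (t : R) (i : 'I_n) : R := b i t / p t.

Definition demand_others (R : realType) (n : nat) (p : R -> R)
  (b : 'I_n -> R -> R) (t : R) (i : 'I_n) : R :=
  \sum_(j < n | j != i) demand p b t j.

Definition active (R : realType) (n : nat) (v : 'I_n -> R) (p : R -> R)
  (b : 'I_n -> R -> R) (t : R) (i : 'I_n) : bool :=
  (p t < v i) && (0 < b i t).

Definition exiting (R : realType) (n : nat) (v : 'I_n -> R) (p : R -> R)
  (b : 'I_n -> R -> R) (t : R) (i : 'I_n) : bool :=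
  (v i == p t) && (0 < b i t).

Definition first_exiting (R : realType) (n : nat) (v : 'I_n -> R) (p : R -> R)
  (b : 'I_n -> R -> R) (t : R) (j : 'I_n) : bool :=
  exiting v p b t j && [forall k : 'I_n, exiting v p b t k ==> (j <= k)%N].

(* clinching set C(t); at price 0 the demands of the others are infinite
   (or undefined), so nobody clinches *)
Definition clinching (R : realType) (n : nat) (v : 'I_n -> R) (p : R -> R)
  (b x : 'I_n -> R -> R) (t : R) (i : 'I_n) : bool :=
  [&& active v p b t i, 0 < p t & supply x t == demand_others p b t i].

(* stopping condition of rule (I): sum_{i in A(t)} D_i(t) <= S(t);
   when p(t) = 0 every active demand is +infinity, so the condition holds
   only if A(t) is empty *)
Definition stop_cond (R : realType) (n : nat) (v : 'I_n -> R) (p : R -> R)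
  (b x : 'I_n -> R -> R) (t : R) : bool :=
  [forall i : 'I_n, ~~ active v p b t i] ||
  ((0 < p t) && (\sum_(i < n | active v p b t i) demand p b t i <= supply x t)).

Definition rule_rates (R : realType) (n : nat) (v : 'I_n -> R) (p : R -> R)
  (b x P : 'I_n -> R -> R) (t : R) : Prop :=
  let S := supply x t in
  if [exists j : 'I_n, exiting v p b t j] then
    has_rderiv p t 0 /\
    forall i : 'I_n,
      if clinching v p b x t i then
        [/\ has_rderiv (b i) t (-1), has_rderiv (P i) t 1
          & has_rderiv (x i) t (1 / p t)]
      else
        [/\ has_rderiv (b i) t (if first_exiting v p b t i then -1 else 0),
            has_rderiv (P i) t 0 & has_rderiv (x i) t 0]
  else
    has_rderiv p t 1 /\
    forall i : 'I_n,
      if clinching v p b x t i then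
        [/\ has_rderiv (b i) t (- S), has_rderiv (P i) t S
          & has_rderiv (x i) t (S / p t)]
      else
        [/\ has_rderiv (b i) t 0, has_rderiv (P i) t 0
          & has_rderiv (x i) t 0].

Definition auction_run (R : realType) (n : nat) (v B : 'I_n -> R)
  (p : R -> R) (b x P : 'I_n -> R -> R) (f : R) : Prop :=
  [/\ 0 <= f,
      p 0 = 0 /\ (forall i, [/\ x i 0 = 0, P i 0 = 0 & b i 0 = B i]),
      {within `[0, f], continuous p} /\
      (forall i, [/\ {within `[0, f], continuous (b i)},
                     {within `[0, f], continuous (x i)}
                   & {within `[0, f], continuous (P i)}]),
      (forall t, 0 <= t < f -> ~~ stop_cond v p b x t /\ rule_rates v p b x P t)
    &
      stop_cond v p b x f].

(* a way of carrying out the allocation of rule (I) at time f: r i is the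
   share of the remainder given to bidder i, at unit price p f,
   within the (effective) budget *)
Definition final_split (R : realType) (n : nat) (v : 'I_n -> R) (p : R -> R)
  (b x : 'I_n -> R -> R) (f : R) (r : 'I_n -> R) : Prop :=
  [/\ forall i, 0 <= r i,
      forall i, ~~ exiting v p b f i -> r i = 0,
      forall i, p f * r i <= b i f
    & \sum_(i < n) r i =
        supply x f - \sum_(i < n | active v p b f i) demand p b f i].

Definition final_alloc (R : realType) (n : nat) (v : 'I_n -> R) (p : R -> R)
  (b x : 'I_n -> R -> R) (f : R) (r : 'I_n -> R) (i : 'I_n) : R :=
  x i f + (if active v p b f i then demand p b f i else 0) + r i.

Definition final_pay (R : realType) (n : nat) (v : 'I_n -> R) (p : R -> R)
  (b P : 'I_n -> R -> R) (f : R) (r : 'I_n -> R) (i : 'I_n) : R :=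
  P i f + p f * ((if active v p b f i then demand p b f i else 0) + r i).

(* Main.v *)
Require Import Defs.
From HB Require Import structures.
From mathcomp Require Import all_boot all_order all_algebra.
From mathcomp Require Import all_classical all_reals all_analysis.
From mathcomp Require Import ring lra.
Import Order.TTheory GRing.Theory Num.Theory.
Import numFieldNormedType.Exports.
Set Implicit Arguments. Unset Strict Implicit. Unset Printing Implicit Defensive.
Local Open Scope ring_scope.
Local Open Scope classical_set_scope.

Section Analysis.
Variable R : realType.

Lemma near_nbhsE (a : R) (Pr : R -> Prop) :
  (\forall y \near a, Pr y) -> exists2 d : R, 0 < d & forall y, `|a - y| < d -> Pr y.
Proof.
move=> /nbhs_ballP [d d0 H]; exists d => // y ay; apply: H.
Qed.

Arguments near_nbhsE {a Pr}.

Lemma near_right0E (Pr : R -> Prop) :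
  (\forall u \near (0:R)^'+, Pr u) -> exists2 d : R, 0 < d & forall u, 0 < u < d -> Pr u.
Proof.
rewrite near_withinE => /near_nbhsE [d d0 H]; exists d => // u /andP [u0 ud].
apply: H => //; rewrite sub0r normrN gtr0_norm //.
Qed.

Arguments near_right0E {Pr}.

Lemma rderivE (g : R -> R) t d : has_rderiv g t d ->
  forall e, 0 < e -> exists2 del : R, 0 < del &
    forall u, 0 < u < del -> `|d - (g (t + u) - g t) / u| < e.
Proof.
move=> H e e0.
have [del del0 Hd] := near_right0E (@cvgr_dist_lt _ R^o _ _ _ _ d H e e0).
by exists del.
Qed.

Lemma wcontE (g : R -> R) (a c x : R) : {within `[a, c], continuous g} ->
  a <= x <= c -> forall e, 0 < e -> exists2 del : R, 0 < del &
   forall y, a <= y <= c -> `|x - y| < del -> `|g x - g y| < e.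
Proof.
move=> /subspace_continuousP H xac e e0.
have Hx : `[a, c] x by rewrite /= in_itv /=.
have := @cvgr_dist_lt _ R^o _ _ _ _ (g x) (H x Hx) e e0.
move=> /(_ (within_filter _ _)); rewrite near_withinE => Hn; have [d d0 Hd] := near_nbhsE Hn.
exists d => // y yac xy.
apply: Hd => //=; rewrite in_itv /=; exact: yac.
Qed.


Lemma barrier (g : R -> R) (a c : R) : a <= c ->
  {within `[a, c], continuous g} -> 0 <= g a ->
  (forall t, a <= t < c -> g t < 0 -> exists2 d, 0 <= d & has_rderiv g t d) ->
  0 <= g c.
Proof.
move=> ac gc ga Hd; rewrite leNgt; apply/negP => gc0.
pose K := c - a + 1.
have K0 : 0 < K by rewrite /K; have := ac; rewrite -subr_ge0; move=> ?; exact: ltr_wpDl.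
pose eps := - g c / (2 * K).
have eps0 : 0 < eps by rewrite /eps divr_gt0 // ?oppr_gt0 // mulr_gt0.
pose h t := g t + eps * (t - a) + eps.
pose T := [set t | a <= t <= c /\ forall u, a <= u <= t -> 0 <= h u].
have Ta : T a.
  split; first by rewrite lexx ac.
  move=> u /andP [] au ua; have -> : u = a by apply/eqP; rewrite eq_le ua au.
  by rewrite /h subrr mulr0 addr0 addr_ge0 // ltW.
have Tne : T !=set0 by exists a.
have Tub : ubound T c by move=> t [] /andP [].
have Tsup : has_sup T by split => //; exists c.
pose s := sup T.
have as_ : a <= s by apply: sup_upper_bound.
have sc : s <= c by apply: ge_sup.
have P1 : forall u, a <= u < s -> 0 <= h u.
  move=> u /andP [] au us.
  have [t [] _ Ht st] := sup_adherent (eps := s - u) (ltac:(by rewrite subr_gt0)) Tsup.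
  apply: Ht; rewrite au /=; move: st; rewrite /s opprB addrC subrK => /ltW //.
have P2 : 0 <= h s.
  rewrite leNgt; apply/negP => hs0.
  have [ea|ltas] := eqVneq a s.
    by move: hs0; rewrite -ea; apply/negP; rewrite -leNgt; apply: (Ta.2); rewrite lexx.
  have ltas' : a < s by rewrite lt_neqAle ltas as_.
  have [del del0 Hc] := @wcontE g a c s gc (ltac:(by rewrite as_ sc)) (- h s) (ltac:(by rewrite oppr_gt0)).
  pose y := Num.max a (s - del / 2).
  have ay : a <= y by rewrite le_max lexx.
  have ys : y < s by rewrite gt_max ltas' /=; lra.
  have sy : `|s - y| < del.
    have ys2 : s - del / 2 <= y by rewrite le_max lexx orbT.
    rewrite gtr0_norm ?subr_gt0 //; lra.
  have := Hc y (ltac:(by rewrite ay /= (le_trans (ltW ys) sc))) sy.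
  have := P1 y (ltac:(by rewrite ay ys)).
  rewrite /h => hy.
  have eya : eps * (y - a) <= eps * (s - a) by apply: ler_wpM2l; [exact: ltW | lra].
  rewrite ltr_distlC => /andP [Hg Hg'].
  rewrite /h in hs0 Hg Hg' hy; lra.
have ss : s = c.
  apply/eqP; rewrite eq_le sc /=; rewrite leNgt; apply/negP => sc'.
  have P3 : exists2 del, 0 < del & forall u, s < u < s + del -> u <= c -> 0 <= h u.
    have [hs0|hspos] := eqVneq (h s) 0.
      have gs0 : g s < 0.
        move: hs0; rewrite /h => hs0.
        have : 0 < eps * (s - a) + eps by rewrite ltr_wpDl // mulr_ge0 ?subr_ge0 // ltW.
        lra.
      have [d d0 Hd'] := Hd s (ltac:(by rewrite as_ sc')) gs0.
      have [del del0 Hr] := @rderivE g s d Hd' eps eps0.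
      exists del => // u /andP [su usd] uc.
      have := Hr (u - s) (ltac:(by rewrite subr_gt0 su /= ltrBlDl)).
      have -> : s + (u - s) = u by rewrite addrC subrK.
      rewrite ltr_distlC => /andP [Hq Hq'].
      have us0 : 0 < u - s by rewrite subr_gt0.
      have : - eps < (g u - g s) / (u - s) by move: Hq; lra.
      rewrite ltr_pdivlMr // => Hq2.
      move: hs0; rewrite /h => hs0.
      have : eps * (u - a) = eps * (s - a) + eps * (u - s) by ring.
      lra.
    have hsp : 0 < h s by rewrite lt_neqAle eq_sym hspos P2.
    have [del del0 Hc] := @wcontE g a c s gc (ltac:(by rewrite as_ sc)) (h s) hsp.
    exists del => // u /andP [su usd] uc.
    have := Hc u (ltac:(by rewrite (le_trans as_ (ltW su)) uc)) (ltac:(by rewrite distrC gtr0_norm ?subr_gt0 // ltrBlDl)).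
    rewrite ltr_distlC => /andP [Hg Hg'].
    have : eps * (s - a) <= eps * (u - a) by apply: ler_wpM2l; [exact: ltW | lra].
    rewrite /h in hsp Hg Hg' *; lra.
  case: P3 => del del0 H3.
  pose t := Num.min (s + del / 2) c.
  have st : s < t by rewrite /t lt_min sc' andbT; lra.
  have t1 : t <= s + del / 2 by rewrite /t ge_min lexx.
  have t2 : t <= c by rewrite /t ge_min lexx orbT.
  have : T t.
    split; first by rewrite (le_trans as_ (ltW st)) t2.
    move=> u /andP [au ut].
    have [us|su] := ltP u s; first by apply: P1; rewrite au us.
    have [es|nes] := eqVneq u s; first by rewrite es.
    have su' : s < u by rewrite lt_neqAle eq_sym nes su.
    apply: H3; last exact: (le_trans ut).
    rewrite su' /=; lra.
  move=> /(sup_upper_bound Tsup); rewrite -/s => ts.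
  by move: st; rewrite ltNge ts.
have hc : 0 <= h c by rewrite -ss.
move: hc; rewrite /h => hc.
have e1 : eps * (c - a) + eps = eps * K by rewrite /K; ring.
have e2 : eps * K = - g c / 2.
  rewrite /eps; field; rewrite -/K; exact: lt0r_neq0.
lra.
Qed.


Lemma rd_eq (f : R -> R) t a b : has_rderiv f t a -> a = b -> has_rderiv f t b.
Proof. by move=> H <-. Qed.

Lemma rd_ext (f g : R -> R) t a : (forall s, f s = g s) -> has_rderiv f t a -> has_rderiv g t a.
Proof. by move=> fg; have -> : f = g by apply: funext. Qed.

Lemma rd_cst (k : R) t : has_rderiv (fun _ => k) t 0.
Proof.
rewrite /has_rderiv; have -> : (fun h : R => (k - k) / h) = (fun _ => 0).
  by apply: funext => h; rewrite subrr mul0r.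
exact: cvg_cst.
Qed.

Lemma rd_add (f g : R -> R) t a b : has_rderiv f t a -> has_rderiv g t b ->
  has_rderiv (fun s => f s + g s) t (a + b).
Proof.
rewrite /has_rderiv => Hf Hg.
have -> : (fun h : R => (f (t + h) + g (t + h) - (f t + g t)) / h) =
  (fun h => (f (t + h) - f t) / h + (g (t + h) - g t) / h).
  by apply: funext => h; rewrite -mulrDl; congr (_ / _); ring.
exact: cvgD.
Qed.

Lemma rd_scale (f : R -> R) (k : R) t a : has_rderiv f t a ->
  has_rderiv (fun s => k * f s) t (k * a).
Proof.
rewrite /has_rderiv => Hf.
have -> : (fun h : R => (k * f (t + h) - k * f t) / h) =
  (fun h => k * ((f (t + h) - f t) / h)).
  by apply: funext => h; rewrite mulrA mulrBr.
apply: cvgM => //; exact: cvg_cst.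
Qed.

Lemma rd_opp (f : R -> R) t a : has_rderiv f t a -> has_rderiv (fun s => - f s) t (- a).
Proof.
move=> Hf; have := @rd_scale f (-1) t a Hf; rewrite mulN1r; apply: rd_ext => s; by rewrite mulN1r.
Qed.

Lemma rd_sub (f g : R -> R) t a b : has_rderiv f t a -> has_rderiv g t b ->
  has_rderiv (fun s => f s - g s) t (a - b).
Proof. by move=> Hf /rd_opp Hg; apply: rd_add. Qed.

Lemma rd_sum (I : eqType) (r : seq I) (Pr : pred I) (F : I -> R -> R) (d : I -> R) t :
  (forall j, Pr j -> has_rderiv (F j) t (d j)) ->
  has_rderiv (fun s => \sum_(j <- r | Pr j) F j s) t (\sum_(j <- r | Pr j) d j).
Proof.
move=> H; elim: r => [|j r IH].
  rewrite big_nil; apply: rd_ext (rd_cst 0 t) => s; by rewrite big_nil.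
rewrite big_cons; case: ifP => Pj.
  apply: rd_ext (rd_add (H j Pj) IH) => s; by rewrite big_cons Pj.
by apply: rd_ext IH => s; rewrite big_cons Pj.
Qed.

Lemma rd_shift (g : R -> R) t : forall h, g (t + h) = g t + h * ((g (t + h) - g t) / h).
Proof.
move=> h; have [->|h0] := eqVneq h 0; first by rewrite addr0 mul0r addr0.
by rewrite mulrC mulfVK //; ring.
Qed.

Lemma rd_mul (f g : R -> R) t a b : has_rderiv f t a -> has_rderiv g t b ->
  has_rderiv (fun s => f s * g s) t (a * g t + f t * b).
Proof.
rewrite /has_rderiv => Hf Hg.
have -> : (fun h : R => (f (t + h) * g (t + h) - f t * g t) / h) =
  (fun h => (f (t + h) - f t) / h * (g t + h * ((g (t + h) - g t) / h)) + f t * ((g (t + h) - g t) / h)).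
  apply: funext => h; rewrite -rd_shift.
  have [->|h0] := eqVneq h 0; first by rewrite !invr0 !mulr0 mul0r addr0.
  by field.
apply: cvgD; last by apply: cvgM => //; exact: cvg_cst.
apply: cvgM => //.
have Hc : (fun h : R => g t + h * ((g (t + h) - g t) / h)) @ 0^'+ --> g t + 0 * b.
  apply: cvgD; first exact: cvg_cst.
  apply: cvgM => //; exact: cvg_within.
by rewrite mul0r addr0 in Hc.
Qed.


Lemma wc_sub (A : set R) (f g : R -> R) : {within A, continuous f} -> {within A, continuous g} ->
  {within A, continuous (fun t => f t - g t)}.
Proof. by move=> Hf Hg y; apply: continuousB; [exact: Hf | exact: Hg]. Qed.

Lemma wc_add (A : set R) (f g : R -> R) : {within A, continuous f} -> {within A, continuous g} ->
  {within A, continuous (fun t => f t + g t)}.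
Proof. by move=> Hf Hg y; apply: continuousD; [exact: Hf | exact: Hg]. Qed.

Lemma wc_mul (A : set R) (f g : R -> R) : {within A, continuous f} -> {within A, continuous g} ->
  {within A, continuous (fun t => f t * g t)}.
Proof. by move=> Hf Hg y; apply: continuousM; [exact: Hf | exact: Hg]. Qed.

Lemma wc_cst (A : set R) (k : R) : {within A, continuous (fun _ => k)}.
Proof. by move=> y; apply: cvg_cst. Qed.

Lemma wc_sum (A : set R) (I : eqType) (r : seq I) (Pr : pred I) (F : I -> R -> R) :
  (forall j, Pr j -> {within A, continuous (F j)}) ->
  {within A, continuous (fun s => \sum_(j <- r | Pr j) F j s)}.
Proof.
move=> H; elim: r => [|j r IH].
  have -> : (fun s => \sum_(j <- [::] | Pr j) F j s) = (fun _ => 0) by apply: funext => s; rewrite big_nil.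
  exact: wc_cst.
have [Pj|Pj] := boolP (Pr j).
  have -> : (fun s => \sum_(k <- j :: r | Pr k) F k s) = (fun s => F j s + \sum_(k <- r | Pr k) F k s).
    by apply: funext => s; rewrite big_cons Pj.
  exact: wc_add (H j Pj) IH.
have -> : (fun s => \sum_(k <- j :: r | Pr k) F k s) = (fun s => \sum_(k <- r | Pr k) F k s).
  by apply: funext => s; rewrite big_cons (negbTE Pj).
exact: IH.
Qed.

Lemma wc_sub_itv (g : R -> R) (a c a' c' : R) : a <= a' -> c' <= c ->
  {within `[a, c], continuous g} -> {within `[a', c'], continuous g}.
Proof.
move=> aa cc; apply: continuous_subspaceW => y /=; rewrite !in_itv /= => /andP [h1 h2].
by rewrite (le_trans aa h1) (le_trans h2 cc).
Qed.

Lemma mono (g : R -> R) (a c : R) : a <= c -> {within `[a, c], continuous g} ->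
  (forall t, a <= t < c -> exists2 d, 0 <= d & has_rderiv g t d) -> g a <= g c.
Proof.
move=> ac gc Hd; rewrite -subr_ge0.
apply: (@barrier (fun t => g t - g a) a c) => //.
- exact: (wc_sub gc (@wc_cst `[a, c] (g a))).
- by rewrite subrr.
move=> t tac _; have [d d0 H] := Hd t tac; exists d => //.
by apply: rd_eq (rd_sub H (rd_cst (g a) t)) _; rewrite subr0.
Qed.

Lemma const (g : R -> R) (a c : R) : a <= c -> {within `[a, c], continuous g} ->
  (forall t, a <= t < c -> has_rderiv g t 0) -> g c = g a.
Proof.
move=> ac gc Hd; apply/eqP; rewrite eq_le; apply/andP; split.
  rewrite -lerN2; apply: (@mono (fun t => - g t)) => //.
    by move=> y; apply: continuousN; exact: gc.
  by move=> t /Hd H; exists 0 => //; apply: rd_eq (rd_opp H) _; rewrite oppr0.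
by apply: mono => // t /Hd H; exists 0.
Qed.

End Analysis.

Lemma greedy (R : realType) (n : nat) (Q : pred 'I_n) (c : 'I_n -> R) (R0 : R) :
  (forall j, 0 <= c j) -> 0 <= R0 -> R0 <= \sum_(j < n | Q j) c j ->
  exists r : 'I_n -> R, [/\ forall j, 0 <= r j <= c j, forall j, ~~ Q j -> r j = 0,
     \sum_(j < n) r j = R0 & forall j k, 0 < r j < c j -> 0 < r k < c k -> j = k].
Proof.
move=> c0; suff H : forall m (Q : pred 'I_n) R0, (#|Q| <= m)%N -> 0 <= R0 ->
  R0 <= \sum_(j < n | Q j) c j ->
  exists r : 'I_n -> R, [/\ forall j, 0 <= r j <= c j, forall j, ~~ Q j -> r j = 0,
     \sum_(j < n) r j = R0 & forall j k, 0 < r j < c j -> 0 < r k < c k -> j = k].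
  exact: (H #|Q| Q R0 (leqnn _)).
elim=> [|m IH] {}Q {}R0 Hm R00 HR.
  have Q0 : #|Q| = 0%N by apply/eqP; rewrite -leqn0.
  have e : R0 = 0.
    apply/eqP; rewrite eq_le R00 andbT; apply: (le_trans HR).
    by rewrite big_pred0 // => j; have := card0_eq Q0 j; rewrite !inE.
  exists (fun _ => 0); split => //; first by move=> j; rewrite lexx c0.
    by rewrite big1 // e.
  by move=> j k; rewrite ltxx.
have [Q0|Qpos] := eqVneq #|Q| 0%N.
  have e : R0 = 0.
    apply/eqP; rewrite eq_le R00 andbT; apply: (le_trans HR).
    by rewrite big_pred0 // => j; have := card0_eq Q0 j; rewrite !inE.
  exists (fun _ => 0); split => //; first by move=> j; rewrite lexx c0.
    by rewrite big1 // e.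
  by move=> j k; rewrite ltxx.
have [q Qq] : exists q, q \in Q by apply/card_gt0P; rewrite lt0n.
have Qq' : Q q := Qq.
pose Q' := [pred j | (j != q) && Q j].
have HQ' : (#|Q'| <= m)%N.
  have -> : #|Q'| = #|[predD1 Q & q]| by apply: eq_card => j; rewrite /Q' !inE.
  by move: Hm; rewrite (cardD1 q Q) Qq add1n ltnS.
have Es : \sum_(j < n | Q j) c j = c q + \sum_(j < n | Q' j) c j.
  by rewrite (bigD1 q) //=; congr (_ + _); apply: eq_bigl => j; rewrite /Q' /= andbC.
have [le|lt] := leP R0 (\sum_(j < n | Q' j) c j).
  have [r [H1 H2 H3 H4]] := IH Q' R0 HQ' R00 le.
  exists r; split => // j Qj; apply: H2; rewrite /Q' /= negb_and Qj orbT //.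
pose r j := if Q' j then c j else if j == q then R0 - \sum_(j < n | Q' j) c j else 0.
have nQ'q : ~~ Q' q by rewrite /Q' /= eqxx.
exists r; split.
- move=> j; rewrite /r; case: ifP => _; first by rewrite lexx c0.
  case: ifP => [/eqP ->|_]; last by rewrite lexx c0.
  by rewrite subr_ge0 (ltW lt) /=; move: HR; rewrite Es; lra.
- move=> j nQj; rewrite /r; case: ifP => [|_].
    by rewrite /Q' /= => /andP [_ Qj]; move: nQj; rewrite Qj.
  by case: ifP => // /eqP e; move: nQj; rewrite e Qq'.
- rewrite (bigD1 q) //= /r (negbTE nQ'q) eqxx.
  have -> : \sum_(i < n | i != q) (if Q' i then c i else if i == q then R0 - \sum_(j < n | Q' j) c j else 0)
     = \sum_(i < n | (i != q) && Q' i) c i.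
    rewrite [RHS]big_mkcondr; apply: eq_bigr => j jq; rewrite (negbTE jq); by [].
  have -> : \sum_(i < n | (i != q) && Q' i) c i = \sum_(j < n | Q' j) c j.
    by apply: eq_bigl => j; rewrite /Q' /=; case: (j != q).
  by rewrite subrK.
- have part : forall j, 0 < r j < c j -> j = q.
    move=> j; rewrite /r; case: ifP => _; first by rewrite ltxx andbF.
    by case: ifP => [/eqP //|_]; rewrite ltxx.
  by move=> j k /part -> /part ->.
Qed.

Local Opaque has_rderiv.

Section Dyn.
Variables (R : realType) (n : nat) (v B : 'I_n -> R) (p : R -> R) (b x P : 'I_n -> R -> R) (f : R).
Hypothesis vge0 : forall i, 0 <= v i.
Hypothesis Bgt0 : forall i, 0 < B i.
Hypothesis run : auction_run v B p b x P f.

Definition S t := supply x t.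
Definition cl t i := clinching v p b x t i.
Definition fe t i := first_exiting v p b t i.
Definition act t i := active v p b t i.
Definition ex t i := exiting v p b t i.
Definition E3 t := [exists j, ex t j].
Definition dp t : R := if E3 t then 0 else 1.
Definition db t i : R := if E3 t then (if cl t i then -1 else if fe t i then -1 else 0)
  else (if cl t i then - S t else 0).
Definition dP t i : R := if E3 t then (if cl t i then 1 else 0) else (if cl t i then S t else 0).
Definition dx t i : R := if E3 t then (if cl t i then 1 / p t else 0)
  else (if cl t i then S t / p t else 0).

Lemma f0 : 0 <= f. Proof. by case: run. Qed.
Lemma p0 : p 0 = 0. Proof. by case: run => _ [] . Qed.
Lemma init i : [/\ x i 0 = 0, P i 0 = 0 & b i 0 = B i]. Proof. by case: run => _ [] _ /(_ i). Qed.
Lemma cp : {within `[0, f], continuous p}. Proof. by case: run => _ _ []. Qed.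
Lemma cont i : [/\ {within `[0, f], continuous (b i)}, {within `[0, f], continuous (x i)}
                   & {within `[0, f], continuous (P i)}].
Proof. by case: run => _ _ [] _ /(_ i). Qed.
Lemma step t : 0 <= t < f -> ~~ stop_cond v p b x t /\ rule_rates v p b x P t.
Proof. by case: run => _ _ _ /(_ t). Qed.
Lemma stopf : stop_cond v p b x f. Proof. by case: run. Qed.

Lemma rates t : 0 <= t < f ->
  has_rderiv p t (dp t) /\ forall i, [/\ has_rderiv (b i) t (db t i),
     has_rderiv (P i) t (dP t i) & has_rderiv (x i) t (dx t i)].
Proof.
move=> /step [_]; rewrite /rule_rates /dp /db /dP /dx /E3 /S /cl /fe /ex.
case: ifP => _ [hp hi]; split => // i; move: (hi i); case: ifP => _ //.
Qed.

Lemma rp t : 0 <= t < f -> has_rderiv p t (dp t). Proof. by case/rates. Qed.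
Lemma rb t i : 0 <= t < f -> has_rderiv (b i) t (db t i). Proof. by case/rates => _ /(_ i) []. Qed.
Lemma rP t i : 0 <= t < f -> has_rderiv (P i) t (dP t i). Proof. by case/rates => _ /(_ i) []. Qed.
Lemma rx t i : 0 <= t < f -> has_rderiv (x i) t (dx t i). Proof. by case/rates => _ /(_ i) []. Qed.

Lemma rS t : 0 <= t < f -> has_rderiv S t (- \sum_(j < n) dx t j).
Proof.
move=> tf; rewrite /S /supply.
rewrite -[X in has_rderiv _ _ X]sub0r.
exact: (rd_sub (rd_cst 1 t) (rd_sum (fun j _ => @rx t j tf))).
Qed.

Lemma itv_sub (a c : R) : 0 <= a -> c <= f -> forall t, a <= t <= c -> 0 <= t < f \/ t = f.
Proof.
move=> a0 cf t /andP [a_t tc]; have [tf|tf] := ltP t f; first by left; apply/andP; split => //; exact: le_trans a0 a_t.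
by right; apply/eqP; rewrite eq_le tf (le_trans tc cf).
Qed.

Lemma cS : {within `[0, f], continuous S}.
Proof.
rewrite /S /supply; apply: wc_sub; first exact: wc_cst.
by apply: wc_sum => j _; case: (cont j).
Qed.

Lemma b_ge0 i t : 0 <= t <= f -> 0 <= b i t.
Proof.
move=> /andP [t0 tf].
have [_ _ b0] := init i.
apply: (@barrier _ (b i) 0 t) => //.
- by case: (cont i) => H _ _; apply: wc_sub_itv H.
- by rewrite b0 ltW.
move=> s /andP [s0 st] bs; exists 0 => //.
have sf : 0 <= s < f by rewrite s0 (lt_le_trans st tf).
have bn : (0 < b i s) = false by apply/negbTE; rewrite -leNgt ltW.
have ncl : ~~ cl s i by rewrite /cl /clinching /active bn !andbF.
have nfe : ~~ fe s i by rewrite /fe /first_exiting /exiting bn !andbF.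
have E : db s i = 0 by rewrite /db (negbTE ncl) (negbTE nfe) if_same.
by rewrite -E; exact: (@rb s i sf).
Qed.

Lemma cl_pos t i : cl t i -> 0 < p t.
Proof. by case/and3P. Qed.

Lemma cl_eq t i : cl t i -> p t * S t = \sum_(j < n | j != i) b j t.
Proof.
case/and3P => _ pt /eqP e; rewrite /S e /demand_others /demand mulr_sumr.
by apply: eq_bigr => j _; rewrite mulrC divfK // gt_eqF.
Qed.

Lemma S_ge0 t : 0 <= t <= f -> 0 <= S t.
Proof.
move=> /andP [t0 tf].
apply: (@barrier _ S 0 t) => //.
- by apply: wc_sub_itv cS.
- by rewrite /S /supply big1 ?subr0 // => j _; case: (init j).
move=> s /andP [s0 st] Ss; exists 0 => //.
have sf : 0 <= s < f by rewrite s0 (lt_le_trans st tf).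
suff E : - \sum_(j < n) dx s j = 0 by rewrite -E; exact: rS sf.
rewrite big1 ?oppr0 // => j _.
have ncl : ~~ cl s j.
  apply/negP => /[dup] /cl_pos ps /cl_eq e.
  have : 0 <= p s * S s by rewrite e sumr_ge0 // => k _; apply: b_ge0; rewrite s0 ltW // (lt_le_trans st tf).
  by rewrite pmulr_rge0 // leNgt Ss.
by rewrite /dx (negbTE ncl) if_same.
Qed.


Lemma sf_of s c : 0 <= s -> s < c -> c <= f -> 0 <= s < f.
Proof. by move=> s0 sc cf; rewrite s0 (lt_le_trans sc cf). Qed.

Lemma p_mono s t : 0 <= s -> s <= t -> t <= f -> p s <= p t.
Proof.
move=> s0 st tf; apply: mono => //.
- exact: wc_sub_itv cp.
move=> u /andP [su ut]; exists (dp u); first by rewrite /dp; case: ifP => _ //; rewrite ler01.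
exact: rp (sf_of (le_trans s0 su) ut tf).
Qed.

Lemma p_ge0 t : 0 <= t -> t <= f -> 0 <= p t.
Proof. by move=> t0 tf; rewrite -p0; apply: p_mono. Qed.

Lemma b_noninc i s t : 0 <= s -> s <= t -> t <= f -> b i t <= b i s.
Proof.
move=> s0 st tf; rewrite -lerN2; apply: (@mono _ (fun u => - b i u)) => //.
- by move=> y; apply: continuousN; case: (cont i) => H _ _; exact: (wc_sub_itv s0 tf H).
move=> u /andP [su ut]; have uf := sf_of (le_trans s0 su) ut tf.
exists (- db u i); last exact: rd_opp (@rb u i uf).
rewrite oppr_ge0 /db; case: ifP => _; first by case: ifP => _; [|case: ifP => _]; rewrite ?lerN10.
case: ifP => _ //; rewrite oppr_le0; apply: S_ge0; move/andP: uf => [u0 uf']; rewrite u0 ltW //.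
Qed.

Lemma dx_ge0 u i : 0 <= u -> u <= f -> 0 <= dx u i.
Proof.
move=> u0 uf; rewrite /dx; case: ifP => _; case: ifP => // /cl_pos pu.
  by rewrite div1r invr_ge0 ltW.
by apply: divr_ge0; [apply: S_ge0; rewrite u0 uf | exact: ltW].
Qed.

Lemma x_mono i s t : 0 <= s -> s <= t -> t <= f -> x i s <= x i t.
Proof.
move=> s0 st tf; apply: mono => //.
- by case: (cont i) => _ H _; exact: (wc_sub_itv s0 tf H).
move=> u /andP [su ut]; have uf := sf_of (le_trans s0 su) ut tf.
exists (dx u i); last exact: (@rx u i uf).
by apply: dx_ge0; [exact: le_trans s0 su | exact: ltW (lt_le_trans ut tf)].
Qed.

Lemma x_ge0 i t : 0 <= t -> t <= f -> 0 <= x i t.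
Proof. by move=> t0 tf; have [<- _ _] := init i; apply: x_mono. Qed.

Lemma x_const i a c : 0 <= a -> a <= c -> c <= f -> (forall s, a <= s < c -> ~~ cl s i) ->
  x i c = x i a.
Proof.
move=> a0 ac cf H; apply: const => //.
- by case: (cont i) => _ Hc _; exact: (wc_sub_itv a0 cf Hc).
move=> u /[dup] /H ncl /andP [au uc]; have uf := sf_of (le_trans a0 au) uc cf.
have E : dx u i = 0 by rewrite /dx (negbTE ncl) if_same.
by rewrite -E; exact: (@rx u i uf).
Qed.

Lemma P_const i a c : 0 <= a -> a <= c -> c <= f -> (forall s, a <= s < c -> ~~ cl s i) ->
  P i c = P i a.
Proof.
move=> a0 ac cf H; apply: const => //.
- by case: (cont i) => _ _ Hc; exact: (wc_sub_itv a0 cf Hc).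
move=> u /[dup] /H ncl /andP [au uc]; have uf := sf_of (le_trans a0 au) uc cf.
have E : dP u i = 0 by rewrite /dP (negbTE ncl) if_same.
by rewrite -E; exact: (@rP u i uf).
Qed.

Lemma bP_const i c : 0 <= c -> c <= f -> (forall s, 0 <= s < c -> ~~ fe s i) ->
  b i c + P i c = B i.
Proof.
move=> c0 cf H; have [_ P0 b0] := init i.
rewrite -[B i]addr0 -P0 -b0; apply: (@const _ (fun u => b i u + P i u)) => //.
- by case: (cont i) => Hb _ Hp; apply: wc_add; [exact: (wc_sub_itv (lexx 0) cf Hb) | exact: (wc_sub_itv (lexx 0) cf Hp)].
move=> u /[dup] /H nfe /andP [u0 uc]; have uf := sf_of u0 uc cf.
have E : db u i + dP u i = 0.
  rewrite /db /dP; case: ifP => _; case: ifP => _; rewrite ?(negbTE nfe); ring.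
by rewrite -E; exact: (rd_add (@rb u i uf) (@rP u i uf)).
Qed.

Definition G i t := p t * S t - \sum_(j < n | j != i) b j t.

Lemma G_inv i u t : 0 <= u -> u <= t -> t <= f -> 0 <= G i u -> 0 <= G i t.
Proof.
move=> u0 ut tf Gu; apply: (@barrier _ (G i) u t) => //.
- apply: (wc_sub_itv u0 tf); apply: wc_sub; first exact: wc_mul cp cS.
  by apply: wc_sum => j _; case: (cont j).
move=> s /andP [us st] Gs; have s0 := le_trans u0 us; have sf := sf_of s0 st tf.
have ncl : ~~ cl s i.
  by apply/negP => /cl_eq e; move: Gs; rewrite /G e subrr ltxx.
have dxi : dx s i = 0 by rewrite /dx (negbTE ncl) if_same.
have Eq : dp s * S s + p s * (- \sum_(j < n) dx s j) - \sum_(j < n | j != i) db s j =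
   dp s * S s - \sum_(j < n | j != i) (p s * dx s j + db s j).
  rewrite (bigD1 i) //= dxi add0r big_split /= mulrN mulr_sumr; ring.
exists (dp s * S s - \sum_(j < n | j != i) (p s * dx s j + db s j)).
  rewrite subr_ge0; apply: le_trans (_ : 0 <= _); last first.
    apply: mulr_ge0; first by rewrite /dp; case: ifP => _; rewrite ?ler01.
    by apply: S_ge0; rewrite s0 /= ltW // (lt_le_trans st tf).
  rewrite sumr_le0 // => j _; rewrite /dx /db; case: ifP => _; case: ifP => clj.
  - by rewrite mul1r mulfV ?gt_eqF ?(cl_pos clj) // addrN.
  - by rewrite mulr0 add0r; case: ifP => _; rewrite ?lerN10.
  - by rewrite mulrC divfK ?gt_eqF ?(cl_pos clj) // addrN.
  - by rewrite mulr0 addr0.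
rewrite -Eq; exact: (rd_sub (rd_mul (rp sf) (rS sf)) (rd_sum (fun j _ => @rb s j sf))).
Qed.


Lemma clinch_exists i t : 0 <= t -> t <= f -> 0 < x i t -> exists2 u, 0 <= u < t & cl u i.
Proof.
move=> t0 tf xt; case: (pselect (exists2 u, 0 <= u < t & cl u i)) => // H; exfalso.
have := @x_const i 0 t (lexx 0) t0 tf.
have [-> _ _] := init i; move=> /(_ _) xt0.
suff : x i t = 0 by move=> e; move: xt; rewrite e ltxx.
apply: xt0 => s st; apply/negP => c; apply: H; exists s => //.
Qed.

Lemma Xpos_G i t : 0 <= t -> t <= f -> 0 < x i t -> 0 <= G i t /\ 0 < p t.
Proof.
move=> t0 tf xt; have [u /andP [u0 ut] clu] := clinch_exists t0 tf xt.
split.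
  apply: (@G_inv i u t u0 (ltW ut) tf); rewrite /G (cl_eq clu) subrr //.
by apply: lt_le_trans (cl_pos clu) _; apply: p_mono => //; exact: ltW.
Qed.

Lemma demand_le_others i t : 0 <= t -> t <= f -> ~~ act t i -> 0 < p t -> 0 <= G i t ->
  \sum_(j < n | active v p b t j) demand p b t j <= supply x t.
Proof.
move=> t0 tf nai pt Gt.
apply: (@le_trans _ _ (\sum_(j < n | j != i) demand p b t j)).
  rewrite big_mkcond [X in _ <= X]big_mkcond /=; apply: ler_sum => j _.
  case: ifP => aj.
    have -> : j != i by apply/negP => /eqP e; move: nai; rewrite -e /act aj.
    by [].
  case: ifP => // _; rewrite /demand; apply: divr_ge0; [by apply: b_ge0; rewrite t0 tf | exact: ltW].
have -> : \sum_(j < n | j != i) demand p b t j = (\sum_(j < n | j != i) b j t) / p t.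
  by rewrite mulr_suml.
rewrite ler_pdivrMr // mulrC.
by move: Gt; rewrite /G subr_ge0.
Qed.

Lemma K i t : 0 <= t -> t < f -> 0 < x i t -> act t i.
Proof.
move=> t0 tf xt; apply/negPn/negP => nai.
have [Gt pt] := Xpos_G t0 (ltW tf) xt.
have [ns _] := step (sf_of t0 tf (lexx f)).
move: ns; rewrite /stop_cond pt /= (demand_le_others t0 (ltW tf) nai pt Gt) orbT //.
Qed.

Lemma Xpos_noex i t : 0 <= t -> t < f -> 0 < x i f -> ~~ ex t i.
Proof.
move=> t0 tf xf; apply/negP => /[dup] exi /andP [/eqP vp bt].
have xe : x i f = x i t.
  apply: x_const => //; first exact: ltW.
  move=> s /andP [ts sf]; apply/negP => /and3P [/andP [ps _] _ _].
  have : p t <= p s by apply: p_mono => //; exact: (lt_le_trans sf (lexx f)) || exact: ltW.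
  by rewrite -vp leNgt ps.
have : act t i by apply: K => //; rewrite -xe.
by rewrite /act /active vp ltxx.
Qed.

Lemma Xpos_bP i : 0 < x i f -> b i f + P i f = B i.
Proof.
move=> xf; apply: bP_const f0 (lexx f) _ => s /andP [s0 sf].
apply/negP => /andP [exs _]; move: (Xpos_noex s0 sf xf); by rewrite /ex exs.
Qed.

Lemma act_bP i : act f i -> b i f + P i f = B i.
Proof.
move=> /andP [pv _]; apply: bP_const f0 (lexx f) _ => s /andP [s0 sf].
apply/negP => /andP [/andP [/eqP vp _] _].
have : p s <= p f by apply: p_mono => //; exact: ltW.
by rewrite -vp leNgt pv.
Qed.

Lemma Xpos_v i : 0 < x i f -> 0 < b i f -> p f <= v i.
Proof.
move=> xf bf; rewrite leNgt; apply/negP => vp.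
have [t tin pt] : exists2 t, t \in `[0, f]%R & p t = v i.
  apply: (@IVT R p 0 f (v i) f0 cp); rewrite p0.
  by apply/andP; split; [rewrite ge_min vge0 | rewrite le_max (ltW vp) orbT].
move: tin; rewrite in_itv /= => /andP [t0 tf].
have tf' : t < f.
  by rewrite lt_neqAle tf andbT; apply/negP => /eqP e; move: vp; rewrite -pt e ltxx.
have : ex t i.
  rewrite /ex /exiting pt eqxx /=; apply: lt_le_trans bf _; exact: b_noninc.
by rewrite (negbTE (Xpos_noex t0 tf' xf)).
Qed.

Lemma drained_unique i k : ex f i -> ex f k ->
  b i f + P i f < B i -> b k f + P k f < B k -> i = k.
Proof.
have key : forall i k, ex f i -> ex f k -> b i f + P i f < B i -> (i <= k)%N.
  move=> {}i {}k exi exk dr.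
  case: (pselect (exists2 t, 0 <= t < f & fe t i)) => [[t /andP [t0 tf] fet]|H]; last first.
    have e : b i f + P i f = B i.
      by apply: bP_const f0 (lexx f) _ => s st; apply/negP => c; apply: H; exists s.
    by move: dr; rewrite e ltxx.
  move: fet => /andP [/andP [/eqP vp _] /forallP /(_ k) /implyP]; apply.
  move: exi exk => /andP [/eqP vi _] /andP [/eqP vk bk].
  rewrite /exiting vk -vi vp eqxx /=; apply: lt_le_trans bk _; apply: b_noninc => //; exact: ltW.
move=> exi exk di dk; apply/val_inj/eqP; rewrite eqn_leq (key i k) //=; exact: key.
Qed.


Lemma sum_act_le t (Q : pred 'I_n) : 0 <= t -> t <= f ->
  (forall j, act t j -> Q j) ->
  \sum_(j < n | active v p b t j) b j t <= \sum_(j < n | Q j) b j t.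
Proof.
move=> t0 tf H; rewrite big_mkcond [X in _ <= X]big_mkcond /=; apply: ler_sum => j _.
case: ifP => aj; first by rewrite (H j aj).
by case: ifP => _ //; apply: b_ge0; rewrite t0 tf.
Qed.

Lemma feas : 0 < p f -> p f * S f <= \sum_(j < n | p f <= v j) b j f.
Proof.
move=> pf.
have fpos : 0 < f.
  by rewrite lt_neqAle f0 andbT; apply/negP => /eqP e; move: pf; rewrite -e p0 ltxx.
rewrite leNgt; apply/negP => Hlt.
pose phi t := \sum_(j < n | p f <= v j) b j t - p t * S t.
have cphi : {within `[0, f], continuous phi}.
  apply: wc_sub; last exact: wc_mul cp cS.
  by apply: wc_sum => j _; case: (cont j).
have finf : `[0, f] f by rewrite /= in_itv /= f0 lexx.
have Hp : p @ within `[0, f] (nbhs f) --> p f by move: cp => /subspace_continuousP; apply.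
have Hphi : phi @ within `[0, f] (nbhs f) --> phi f by move: cphi => /subspace_continuousP; apply.
have FF : Filter (within `[0, f] (nbhs f)) by apply: within_filter.
have N1 := cvgr_gt (p f) Hp 0 pf.
have N2 : \forall t \near within `[0, f] (nbhs f), forall j, v j < p f -> v j < p t.
  apply: filter_forall => j; have [vj|vj] := ltP (v j) (p f).
    by apply: filterS (cvgr_gt (p f) Hp (v j) vj) => t ht _.
  by apply: nearW => t h.
have N3 := cvgr_lt (phi f) Hphi 0 (ltac:(by rewrite /phi subr_lt0)).
have N := filterI (N1 FF) (filterI N2 (N3 FF)).
have N' : \forall y \near f, `[0, f] y ->
   (0 < p y /\ ((forall j, v j < p f -> v j < p y) /\ phi y < 0)) := N FF FF.
have [d d0 Hd] := near_nbhsE N'.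
pose y := Num.max 0 (f - d / 2).
have y0 : 0 <= y by rewrite le_max lexx.
have yf : y < f by rewrite gt_max fpos /=; lra.
have fy : `|f - y| < d.
  have : f - d / 2 <= y by rewrite le_max lexx orbT.
  by rewrite gtr0_norm ?subr_gt0 //; lra.
have [py [Hv phiy]] := Hd y fy (ltac:(by rewrite /= in_itv /= y0 ltW)).
have [ns _] := step (sf_of y0 yf (lexx f)).
move: ns; rewrite /stop_cond negb_or py /= => /andP [_].
rewrite -ltNge => HS.
have : p y * S y < \sum_(j < n | active v p b y j) b j y.
  rewrite mulrC -ltr_pdivlMr //; move: HS.
  by rewrite /demand -mulr_suml /S.
have : \sum_(j < n | active v p b y j) b j y <= \sum_(j < n | p f <= v j) b j y.
  apply: sum_act_le => //; first exact: ltW.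
  move=> j /andP [pvj _]; rewrite leNgt; apply/negP => vj.
  by move: (Hv j vj); rewrite ltNge (ltW pvj).
move: phiy; rewrite /phi; lra.
Qed.


Lemma pf0_v : p f = 0 -> forall i, v i = 0.
Proof.
move=> pf0 i; apply/eqP; rewrite eq_le vge0 andbT leNgt; apply/negP => vpos.
have ps : forall s, 0 <= s -> s <= f -> p s = 0.
  move=> s s0 sf; apply/eqP; rewrite eq_le p_ge0 // andbT -pf0; exact: p_mono.
have nfe : forall s, 0 <= s < f -> ~~ fe s i.
  move=> s /andP [s0 sf]; apply/negP => /andP [/andP [/eqP e _] _].
  by move: vpos; rewrite e (ps s s0 (ltW sf)) ltxx.
have bP := bP_const f0 (lexx f) nfe.
have Pf : P i f = 0.
  have [_ <- _] := init i; apply: P_const => //; first exact: f0.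
  by move=> s /andP [s0 sf]; apply/negP => /cl_pos; rewrite (ps s s0 (ltW sf)) ltxx.
have bf : b i f = B i by rewrite -bP Pf addr0.
have acti : active v p b f i by rewrite /active pf0 vpos bf Bgt0.
move: stopf; rewrite /stop_cond pf0 ltxx andFb orbF => /forallP /(_ i).
by rewrite acti.
Qed.

Lemma pf0_f : p f = 0 -> f = 0.
Proof.
move=> pf0; have vz := pf0_v pf0.
have [e|fpos] := eqVneq f 0; first by [].
have fp : 0 < f by rewrite lt_neqAle eq_sym fpos f0.
have [ns _] := step (sf_of (lexx 0) fp (lexx f)).
move: ns; rewrite /stop_cond negb_or => /andP [/negP H _]; exfalso; apply: H.
by apply/forallP => i; rewrite /active p0 vz ltxx.
Qed.

Definition cc j := demand p b f j.

Lemma ex_nact t j : ex t j -> ~~ active v p b t j.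
Proof. by move=> /andP [/eqP e _]; rewrite /active e ltxx. Qed.

Lemma cc_ge0 j : 0 < p f -> 0 <= cc j.
Proof. by move=> pf; rewrite /cc /demand; apply: divr_ge0; [apply: b_ge0; rewrite f0 lexx | exact: ltW]. Qed.

Lemma pcc j : 0 < p f -> p f * cc j = b j f.
Proof. by move=> pf; rewrite /cc /demand mulrC divfK // gt_eqF. Qed.

Lemma good_nonex (r : 'I_n -> R) j : 0 < p f -> ~~ ex f j -> r j = 0 ->
  0 < final_alloc v p b x f r j -> final_pay v p b P f r j < B j -> False.
Proof.
move=> pf nex rj; rewrite /final_alloc /final_pay rj !addr0.
case: ifP => aj.
  by move=> _; rewrite -/(cc j) pcc // addrC act_bP // ltxx.
rewrite addr0 mulr0 addr0 => xj.
have bP := Xpos_bP xj.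
have [bpos|bz] := ltP 0 (b j f).
  have := Xpos_v xj bpos; rewrite le_eqVlt => /orP [/eqP e|lt].
    by move: nex; rewrite /ex /exiting e eqxx bpos.
  by move: aj; rewrite /active lt bpos.
have b0 : b j f = 0 by apply/eqP; rewrite eq_le bz b_ge0 // f0 lexx.
by rewrite -bP b0 add0r ltxx.
Qed.

Lemma good_full (r : 'I_n -> R) j : 0 < p f -> ex f j -> r j = cc j -> B j <= b j f + P j f ->
  final_pay v p b P f r j < B j -> False.
Proof.
move=> pf exj rj bP; rewrite /final_pay (negbTE (ex_nact exj)) add0r rj pcc //.
by rewrite addrC ltNge bP.
Qed.

Lemma good_zero (r : 'I_n -> R) j : ex f j -> x j f <= 0 -> r j = 0 ->
  0 < final_alloc v p b x f r j -> False.
Proof.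
move=> exj xj rj; rewrite /final_alloc (negbTE (ex_nact exj)) rj !addr0.
by rewrite ltNge xj.
Qed.

Lemma S_ge_others i : 0 < x i f -> \sum_(j < n | j != i) cc j <= supply x f.
Proof.
move=> xf; have [Gf pf] := Xpos_G f0 (lexx f) xf.
have -> : \sum_(j < n | j != i) cc j = (\sum_(j < n | j != i) b j f) / p f.
  by rewrite mulr_suml.
rewrite ler_pdivrMr // mulrC; by move: Gf; rewrite /G subr_ge0.
Qed.

Lemma S_le_AE : 0 < p f ->
  supply x f <= \sum_(j < n | active v p b f j) cc j + \sum_(j < n | ex f j) cc j.
Proof.
move=> pf; have F := feas pf.
suff : p f * S f <= p f * (\sum_(j < n | active v p b f j) cc j + \sum_(j < n | ex f j) cc j).
  by rewrite ler_pM2l.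
apply: (le_trans F); rewrite mulrDr !mulr_sumr.
rewrite big_mkcond [X in _ <= X + _]big_mkcond [X in _ <= _ + X]big_mkcond -big_split /=.
apply: ler_sum => j _; rewrite !pcc //.
have bj : 0 <= b j f by apply: b_ge0; rewrite f0 lexx.
case: ifP => pv; last by case: ifP; case: ifP => _ _; rewrite ?addr0 ?add0r // addr_ge0.
have [bpos|bz] := ltP 0 (b j f); last first.
  have -> : b j f = 0 by apply/eqP; rewrite eq_le bz bj.
  by case: ifP; case: ifP => _ _; rewrite ?addr0 ?add0r.
move: pv; rewrite le_eqVlt => /orP [/eqP e|lt].
  have exj : ex f j by rewrite /ex /exiting e eqxx bpos.
  by rewrite exj (negbTE (ex_nact exj)) add0r.
have aj : active v p b f j by rewrite /active lt bpos.
have nex : ex f j = false by apply/negP => /ex_nact; rewrite aj.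
by rewrite aj nex addr0.
Qed.


Lemma main_pos : 0 < p f -> exists r : 'I_n -> R,
    final_split v p b x f r /\
    (forall i j : 'I_n,
      0 < final_alloc v p b x f r i -> final_pay v p b P f r i < B i ->
      0 < final_alloc v p b x f r j -> final_pay v p b P f r j < B j ->
      i = j).
Proof.
move=> pf.
pose R0 := supply x f - \sum_(j < n | active v p b f j) demand p b f j.
have R0ge0 : 0 <= R0.
  rewrite /R0 subr_ge0; move: stopf; rewrite /stop_cond pf /= => /orP [/forallP H|//].
  rewrite big_pred0; last by move=> j; apply/negbTE/H.
  by apply: S_ge0; rewrite f0 lexx.
have R0le : R0 <= \sum_(j < n | ex f j) cc j.
  by rewrite /R0 lerBlDl; exact: S_le_AE.
have ccge := fun j => cc_ge0 j pf.
case: (pselect (exists2 i, ex f i & 0 < x i f)) => [[i exi xi]|noA].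
  have exi' : exiting v p b f i := exi.
  pose Ri := R0 - \sum_(j < n | ex f j && (j != i)) cc j.
  pose r j := if j == i then Ri else if ex f j then cc j else 0.
  have sumE : \sum_(j < n | ex f j) cc j = cc i + \sum_(j < n | ex f j && (j != i)) cc j.
    by rewrite (bigD1 i).
  have Ri0 : 0 <= Ri.
    rewrite /Ri /R0 subr_ge0 lerBrDl.
    apply: le_trans (S_ge_others xi).
    rewrite big_mkcond [X in X + _ <= _]big_mkcond [X in _ + X <= _]big_mkcond -big_split.
    rewrite [X in _ <= X]big_mkcond; apply: ler_sum => j _ /=.
    have [ji|ji] := eqVneq j i.
      by rewrite ji (negbTE (ex_nact exi)) andbF add0r.
    rewrite /=; case: ifP => aj.
      have nex : ex f j = false by apply/negP => /ex_nact; rewrite aj.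
      by rewrite nex addr0.
    by rewrite add0r; case: ifP => _.
  have Rici : Ri <= cc i by rewrite /Ri lerBlDr -sumE.
  exists r; split.
    split.
    - by move=> j; rewrite /r; case: ifP => _ //; case: ifP => _.
    - move=> j nex; rewrite /r; have ji : (j == i) = false.
        by apply/negP => /eqP e; move: nex; rewrite e exi'.
      by rewrite ji /ex (negbTE nex).
    - move=> j; rewrite /r; case: ifP => [/eqP ->|_].
        by rewrite -(pcc i pf) ler_pM2l.
      case: ifP => _; first by rewrite /cc /demand mulrC divfK // gt_eqF.
      by rewrite mulr0; apply: b_ge0; rewrite f0 lexx.
    - rewrite (bigD1 i) //= /r eqxx.
      have -> : \sum_(j < n | j != i) (if j == i then Ri else if ex f j then cc j else 0) =
               \sum_(j < n | ex f j && (j != i)) cc j.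
        rewrite [RHS](eq_bigl (fun j => (j != i) && ex f j)); last by move=> j; rewrite andbC.
        rewrite big_mkcondr; apply: eq_bigr => j ji; by rewrite (negbTE ji).
      by rewrite /Ri subrK.
  have good : forall j, j != i -> 0 < final_alloc v p b x f r j -> final_pay v p b P f r j < B j -> False.
    move=> j ji; have [exj|nex] := boolP (ex f j).
      move=> _; apply: (good_full pf exj); first by rewrite /r (negbTE ji) exj.
      rewrite le_eqVlt; apply/orP; left; apply/eqP; apply/esym; apply: bP_const f0 (lexx f) _.
      move=> s /andP [s0 sf]; apply/negP => /andP [/andP [/eqP vjs _] _].
      have : ex s i.
        move: exi exj => /andP [/eqP vi bi] /andP [/eqP vj _].
        rewrite /ex /exiting vi -vj vjs eqxx /=; apply: lt_le_trans bi _; apply: b_noninc => //; exact: ltW.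
      by rewrite (negbTE (Xpos_noex s0 sf xi)).
    apply: (good_nonex pf nex); by rewrite /r (negbTE ji) (negbTE nex).
  move=> j k aj pj ak pk.
  have [ji|ji] := eqVneq j i; last by exfalso; exact: (good j ji aj pj).
  have [ki|ki] := eqVneq k i; last by exfalso; exact: (good k ki ak pk).
  by rewrite ji ki.
have x0 : forall j, ex f j -> x j f <= 0.
  move=> j exj; rewrite leNgt; apply/negP => xj; apply: noA; by exists j.
pose Q := [pred j | ex f j && (B j <= b j f + P j f)].
have [le|lt] := leP R0 (\sum_(j < n | Q j) cc j).
  have [r [H1 H2 H3 H4]] := greedy ccge R0ge0 le.
  exists r; split.
    split.
    - by move=> j; case/andP: (H1 j).
    - by move=> j nex; apply: H2; rewrite /Q /= negb_and nex.
    - move=> j; case/andP: (H1 j) => _ rc.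
      by rewrite -(pcc j pf) ler_pM2l.
    - by rewrite H3.
  have bad : forall j, 0 < final_alloc v p b x f r j -> final_pay v p b P f r j < B j -> 0 < r j < cc j.
    move=> j aj pj; have [exj|nex] := boolP (ex f j); last first.
      by exfalso; apply: (good_nonex pf nex _ aj pj); apply: H2; rewrite /Q /= negb_and nex.
    have [Qj|nQ] := boolP (Q j); last first.
      by exfalso; apply: (good_zero exj (x0 j exj) _ aj); exact: H2.
    case/andP: (H1 j) => r0 rc; rewrite lt_neqAle r0 andbT lt_neqAle rc andbT.
    apply/andP; split.
      apply/negP => /eqP e; exact: (good_zero exj (x0 j exj) (esym e) aj).
    apply/negP => /eqP e; move: Qj; rewrite /Q /= => /andP [_ bP]; exact: (good_full pf exj e bP pj).
  by move=> j k aj pj ak pk; apply: H4; [exact: bad | exact: bad].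
have exQ : forall j, ex f j -> ~~ Q j -> b j f + P j f < B j.
  by move=> j exj; rewrite /Q /= exj /= -ltNge.
have [d exd dd] : exists2 d, ex f d & b d f + P d f < B d.
  case: (pselect (exists2 d, ex f d & b d f + P d f < B d)) => // H; exfalso.
  have : \sum_(j < n | ex f j) cc j <= \sum_(j < n | Q j) cc j.
    rewrite big_mkcond [X in _ <= X]big_mkcond; apply: ler_sum => j _.
    have [exj|nex] := boolP (ex f j).
      have [Qj|nQ] := boolP (Q j); first by [].
      by exfalso; apply: H; exists j => //; apply: exQ.
    by case: (Q j) => //; apply: ccge.
  by move: R0le lt; rewrite /=; lra.
pose r j := if Q j then cc j else if j == d then R0 - \sum_(k < n | Q k) cc k else 0.
have nQd : ~~ Q d by rewrite /Q /= negb_and -ltNge dd orbT.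
have sumE : \sum_(j < n | ex f j) cc j = cc d + \sum_(j < n | Q j) cc j.
  rewrite (bigD1 d) //=; congr (_ + _); apply: eq_bigl => j; apply/idP/idP.
    move=> /andP [exj jd]; have [//|nQ] := boolP (Q j).
    by move: jd; rewrite (drained_unique exj exd (exQ j exj nQ) dd) eqxx.
  move=> Qj; have exj : ex f j by move: Qj; rewrite /Q /= => /andP [].
  rewrite exj /=; apply/negP => /eqP e; move: nQd; rewrite -e => /negP; apply; exact: Qj.
have rd : R0 - \sum_(k < n | Q k) cc k <= cc d by move: R0le; rewrite sumE; lra.
exists r; split.
  split.
  - move=> j; rewrite /r; case: ifP => _ //; case: ifP => _ //.
    by rewrite subr_ge0 ltW.
  - move=> j nex; rewrite /r.
    have nQ : Q j = false by apply/negbTE; rewrite /Q /= negb_and; apply/orP; left; exact: nex.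
    have jd : (j == d) = false by apply/negP => /eqP e; move: nex; rewrite e => /negP; apply; exact: exd.
    by rewrite nQ jd.
  - move=> j; rewrite /r; case: ifP => _; first by rewrite pcc.
    case: ifP => [/eqP ->|_]; first by rewrite -(pcc d pf) ler_pM2l.
    by rewrite mulr0; apply: b_ge0; rewrite f0 lexx.
  - rewrite (bigD1 d) //= /r (negbTE nQd) eqxx.
    have -> : \sum_(j < n | j != d) (if Q j then cc j else if j == d then R0 - \sum_(k < n | Q k) cc k else 0)
       = \sum_(j < n | Q j) cc j.
      rewrite [RHS](eq_bigl (fun j => (j != d) && Q j)); last first.
        move=> j; have [e|//] := eqVneq j d; by rewrite e (negbTE nQd).
      rewrite [RHS]big_mkcondr; apply: eq_bigr => j jd; case: ifP => //; by rewrite (negbTE jd).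
    by rewrite subrK.
have bad : forall j, 0 < final_alloc v p b x f r j -> final_pay v p b P f r j < B j -> j = d.
  move=> j aj pj; have [exj|nex] := boolP (ex f j); last first.
    exfalso; apply: (good_nonex pf nex _ aj pj); rewrite /r.
    have nQ : Q j = false by rewrite /Q /= (negbTE nex).
    have jd : (j == d) = false by apply/negP => /eqP e; move: nex; rewrite e exd.
    by rewrite nQ jd.
  have [Qj|nQ] := boolP (Q j).
    exfalso; apply: (good_full pf exj _ _ pj); first by rewrite /r Qj.
    by move: Qj; rewrite /Q /= => /andP [].
  exact: drained_unique exj exd (exQ j exj nQ) dd.
by move=> j k aj pj ak pk; rewrite (bad j aj pj) (bad k ak pk).
Qed.

Lemma main_all (n0 : (0 < n)%N) : exists r : 'I_n -> R,
    final_split v p b x f r /\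
    (forall i j : 'I_n,
      0 < final_alloc v p b x f r i -> final_pay v p b P f r i < B i ->
      0 < final_alloc v p b x f r j -> final_pay v p b P f r j < B j ->
      i = j).
Proof.
have := p_ge0 f0 (lexx f); rewrite le_eqVlt => /orP [/eqP pf0|pos]; last exact: main_pos.
have pf0' : p f = 0 by rewrite pf0.
have f00 := pf0_f pf0'; have vz := pf0_v pf0'.
pose i0 : 'I_n := Ordinal n0.
pose r (j : 'I_n) : R := if j == i0 then 1 else 0.
have nact : forall j, active v p b 0 j = false by move=> j; rewrite /active p0 vz ltxx.
rewrite f00; exists r; split.
  split.
  - by move=> j; rewrite /r; case: ifP.
  - move=> j; rewrite /exiting vz p0 eqxx /=; have [_ _ ->] := init j; by rewrite Bgt0.
  - move=> j; rewrite p0 mul0r; have [_ _ ->] := init j; exact: ltW.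
  - rewrite [X in _ = _ - X]big_pred0; last by move=> j; rewrite nact.
    rewrite subr0 /supply [X in _ = 1 - X]big1 ?subr0; last by move=> j _; have [e _ _] := init j.
    by rewrite /r -big_mkcond big_pred1_eq.
have al : forall j, 0 < final_alloc v p b x 0 r j -> j = i0.
  move=> j; rewrite /final_alloc nact; have [-> _ _] := init j.
  by rewrite /= addr0 add0r /r; case: ifP => [/eqP //|]; rewrite ltxx.
by move=> j k /al -> _ /al ->.
Qed.

End Dyn.

Local Close Scope classical_set_scope.
Unset Implicit Arguments.

Theorem lemma5 (R : realType) (n : nat) (v B : 'I_n -> R)
  (p : R -> R) (b x P : 'I_n -> R -> R) (f : R) :
  (0 < n)%N ->
  (forall i, 0 <= v i) ->
  (forall i, 0 < B i) ->
  auction_run v B p b x P f ->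
  exists r : 'I_n -> R,
    final_split v p b x f r /\
    (forall i j : 'I_n,
      0 < final_alloc v p b x f r i -> final_pay v p b P f r i < B i ->
      0 < final_alloc v p b x f r j -> final_pay v p b P f r j < B j ->
      i = j).
Proof. by move=> n0 vge0 Bgt0 run; apply: (main_all vge0 Bgt0 run n0). Qed.
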